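(* Let $\mu\in\mathbb{R}$ and $\alpha>0$, and define $\gamma_{\mu,\alpha}:(-\infty,-2|\mu|]\cup[2|\mu|,\infty)\to\mathbb{R}$ by letting $\gamma_{\mu,\alpha}(y)$ be the unique $x\in\mathbb{R}$ with $x=\mu\log|x+iy|-\log\alpha$. Then: (i) $\gamma_{\mu,\alpha}$ is continuously differentiable; (ii) if $\mu>0$ then $\gamma_{\mu,\alpha}(y)\to\infty$ as $|y|\to\infty$; if $\mu<0$ then $\gamma_{\mu,\alpha}(y)\to-\infty$ as $|y|\to\infty$; if $\mu=0$ then $\gamma_{\mu,\alpha}\equiv-\log\alpha$; (iii) $|\gamma_{\mu,\alpha}'(y)|\le2|\mu|/|y|$; in particular $\gamma_{\mu,\alpha}'(y)\to0$ as $|y|\to\infty$ uniformly in $\alpha$; (iv) for $\alpha>\beta>0$ and all $y$ in the domain, $$\tfrac23\log\tfrac{\alpha}{\beta}\le\gamma_{\mu,\beta}(y)-\gamma_{\mu,\alpha}(y)\le2\log\tfrac{\alpha}{\beta},\qquad \lim_{|y|\to\infty}(\gamma_{\mu,\beta}(y)-\gamma_{\mu,\alpha}(y))=\log\tfrac{\alpha}{\beta}.$$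
   Context: For $|y|\ge2|\mu|$ there is indeed a unique $x$ with $x=\mu\log|x+iy|-\log\alpha$. *)

(* Defs.v *)
From Stdlib Require Import Reals Lra ClassicalEpsilon.
Open Scope R_scope.

Definition gdom (mu y : R) : Prop := 2 * Rabs mu <= Rabs y.

(* gamma_{mu,alpha}(y): the (unique, on gdom mu) x with
   x = mu * log |x + i y| - log alpha, where |x + i y| = sqrt (x^2 + y^2).
   Chosen by Hilbert's epsilon; off the domain the value is irrelevant. *)
Definition gamma (mu alpha y : R) : R :=
  epsilon (inhabits 0) (fun x => x = mu * ln (sqrt (x ^ 2 + y ^ 2)) - ln alpha).

Definition has_derivative_within (f : R -> R) (D : R -> Prop) (x l : R) : Prop :=
  forall eps, 0 < eps -> exists delta, 0 < delta /\
    forall z, D z -> z <> x -> Rabs (z - x) < delta ->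
      Rabs ((f z - f x) / (z - x) - l) < eps.

Definition continuous_on (g : R -> R) (D : R -> Prop) : Prop :=
  forall y, D y -> forall eps, 0 < eps -> exists delta, 0 < delta /\
    forall z, D z -> Rabs (z - y) < delta -> Rabs (g z - g y) < eps.

(* Main.v *)
Require Import Defs.
From Stdlib Require Import Reals.
Open Scope R_scope.
From Stdlib Require Import ClassicalEpsilon.
From Stdlib Require Import Reals Lra Psatz.
From Coquelicot Require Import Coquelicot.
Open Scope R_scope.
Definition phi x y := ln (sqrt (x ^ 2 + y ^ 2)).

Lemma dphi_x y t : 0 < t^2 + y^2 -> derivable_pt_lim (fun t => phi t y) t (t / (t^2 + y^2)).
Proof.
  intro H. apply is_derive_Reals. unfold phi.
  auto_derive.
  - split; [lra|]. split; [|exact I]. apply sqrt_lt_R0; lra.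
  - replace (t * (t * 1) + y * (y * 1)) with (t^2+y^2) by ring.
    assert (Hs: 0 < sqrt (t^2+y^2)) by (apply sqrt_lt_R0; lra).
    transitivity (t / (sqrt (t^2+y^2) * sqrt (t^2+y^2))).
    + field. lra.
    + rewrite sqrt_sqrt; lra.
Qed.
Lemma dphi_y x t : 0 < x^2 + t^2 -> derivable_pt_lim (fun t => phi x t) t (t / (x^2 + t^2)).
Proof.
  intro H. apply is_derive_Reals. unfold phi.
  auto_derive.
  - split; [lra|]. split; [|exact I]. apply sqrt_lt_R0; lra.
  - replace (x * (x * 1) + t * (t * 1)) with (x^2+t^2) by ring.
    assert (Hs: 0 < sqrt (x^2+t^2)) by (apply sqrt_lt_R0; lra).
    transitivity (t / (sqrt (x^2+t^2) * sqrt (x^2+t^2))).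
    + field. lra.
    + rewrite sqrt_sqrt; lra.
Qed.

Lemma mvt_gen (f f' : R -> R) a b :
  (forall c, Rmin a b <= c <= Rmax a b -> derivable_pt_lim f c (f' c)) ->
  exists c, Rmin a b <= c <= Rmax a b /\ f b - f a = f' c * (b - a).
Proof.
  intro H. destruct (Rtotal_order a b) as [h|[h|h]].
  - destruct (MVT_cor2 f f' a b h) as [c [E Hc]].
    { intros c Hc; apply H. rewrite Rmin_left, Rmax_right; lra. }
    exists c. rewrite Rmin_left, Rmax_right by lra. split; [lra|exact E].
  - subst. exists b. rewrite Rmin_left, Rmax_left by lra. split; [lra|ring].
  - destruct (MVT_cor2 f f' b a h) as [c [E Hc]].
    { intros c Hc; apply H. rewrite Rmin_right, Rmax_left; lra. }
    exists c. rewrite Rmin_right, Rmax_left by lra. split; [lra|]. lra.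
Qed.

Lemma phi_x_bound y a b : y <> 0 ->
  Rabs (phi a y - phi b y) <= Rabs (a - b) / (2 * Rabs y).
Proof.
  intro Hy. assert (Hy2 : 0 < y^2) by (apply pow2_gt_0; auto).
  destruct (mvt_gen (fun t => phi t y) (fun t => t / (t^2+y^2)) b a) as [c [_ E]].
  { intros c _. apply dphi_x. nra. }
  rewrite E, Rabs_mult.
  assert (Hay : 0 < Rabs y) by (apply Rabs_pos_lt; auto).
  assert (Hc : Rabs (c / (c^2+y^2)) <= 1 / (2 * Rabs y)).
  { assert (0 < c^2+y^2) by nra.
    rewrite Rabs_div, (Rabs_right (c^2+y^2)) by lra.
    apply Rmult_le_reg_r with (2 * Rabs y * (c^2+y^2)); [nra|].
    field_simplify; [|lra|lra].
    rewrite <- (pow2_abs c), <- (pow2_abs y).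
    assert (0 <= (Rabs c - Rabs y)^2) by apply pow2_ge_0. lra. }
  replace (Rabs (a - b) / (2 * Rabs y)) with (1 / (2 * Rabs y) * Rabs (a - b)) by (field; lra).
  apply Rmult_le_compat_r; [apply Rabs_pos|exact Hc].
Qed.

Lemma between_bound m y z eta : 0 < m -> m <= Rabs y -> m <= Rabs z -> Rabs (z - y) < Rabs y ->
  Rmin y z <= eta <= Rmax y z -> m <= Rabs eta.
Proof.
  intros. unfold Rmin, Rmax in *. destruct (Rle_dec y z);
  unfold Rabs in *; repeat destruct Rcase_abs; lra.
Qed.

Lemma phi_y_mvt x y z : (forall eta, Rmin y z <= eta <= Rmax y z -> eta <> 0) ->
  exists eta, Rmin y z <= eta <= Rmax y z /\ phi x z - phi x y = eta / (x^2 + eta^2) * (z - y).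
Proof.
  intro H. apply (mvt_gen (fun t => phi x t) (fun t => t / (x^2+t^2)) y z).
  intros c Hc. apply dphi_y. specialize (H c Hc). assert (0 < c^2) by (apply pow2_gt_0; auto).
  assert (0 <= x^2) by apply pow2_ge_0. lra.
Qed.

Lemma eta_bound x eta : eta <> 0 -> Rabs (eta / (x^2 + eta^2)) <= 1 / Rabs eta.
Proof.
  intro H. assert (0 < eta^2) by (apply pow2_gt_0; auto).
  assert (0 <= x^2) by apply pow2_ge_0.
  assert (Ha : 0 < Rabs eta) by (apply Rabs_pos_lt; auto).
  rewrite Rabs_div, (Rabs_right (x^2+eta^2)) by lra.
  apply Rmult_le_reg_r with (Rabs eta * (x^2+eta^2)); [nra|].
  field_simplify; [|lra|lra]. rewrite <- (pow2_abs eta). lra.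
Qed.

Lemma phi_cont y x : y <> 0 -> continuity_pt (fun t => phi t y) x.
Proof.
  intro Hy. apply derivable_continuous_pt.
  exists (x / (x^2+y^2)). apply dphi_x.
  assert (0 < y^2) by (apply pow2_gt_0; auto). assert (0 <= x^2) by apply pow2_ge_0. lra.
Qed.

Lemma gdom_nz mu y : mu <> 0 -> gdom mu y -> y <> 0.
Proof. unfold gdom. intros H1 H2 E. subst. rewrite Rabs_R0 in H2.
  assert (0 < Rabs mu) by (apply Rabs_pos_lt; auto). lra. Qed.

Lemma contract mu y a b : gdom mu y -> y <> 0 ->
  Rabs (mu * (phi a y - phi b y)) <= Rabs (a - b) / 4.
Proof.
  intros Hd Hy. unfold gdom in Hd. rewrite Rabs_mult.
  pose proof (phi_x_bound y a b Hy).
  assert (0 < Rabs y) by (apply Rabs_pos_lt; auto).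
  apply Rle_trans with (Rabs mu * (Rabs (a - b) / (2 * Rabs y))).
  - apply Rmult_le_compat_l; [apply Rabs_pos|auto].
  - pose proof (Rabs_pos (a-b)). pose proof (Rabs_pos mu).
    apply Rmult_le_reg_r with (2 * Rabs y * 4); [lra|].
    field_simplify; [|lra]. nra.
Qed.

Lemma gamma_exists mu alpha y : gdom mu y -> exists x, x = mu * phi x y - ln alpha.
Proof.
  intro Hd. destruct (Req_dec mu 0) as [H0|H0].
  - exists (- ln alpha). subst. ring.
  - pose proof (gdom_nz mu y H0 Hd) as Hy.
    set (F := fun x => x - mu * phi x y + ln alpha).
    assert (HF : forall x, Rabs (F x - F 0 - x) <= Rabs x / 4).
    { intro x. unfold F. replace (x - mu * phi x y + ln alpha - (0 - mu * phi 0 y + ln alpha) - x)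
        with (- (mu * (phi x y - phi 0 y))) by ring. rewrite Rabs_Ropp.
      replace (Rabs x) with (Rabs (x - 0)) by (f_equal; ring). apply contract; auto. }
    set (b := 2 * Rabs (F 0) + 1).
    assert (Hb : 0 < b) by (unfold b; pose proof (Rabs_pos (F 0)); lra).
    assert (Fb : 0 < F b).
    { pose proof (HF b). rewrite (Rabs_right b) in H by lra.
      pose proof (Rle_abs (F 0)). pose proof (Rle_abs (- F 0)) as HH. rewrite Rabs_Ropp in HH.
      unfold Rabs in H. destruct (Rcase_abs (F b - F 0 - b)); unfold b in *; lra. }
    assert (Fa : F (-b) < 0).
    { pose proof (HF (-b)). rewrite Rabs_Ropp, (Rabs_right b) in H by lra.
      pose proof (Rle_abs (F 0)). pose proof (Rle_abs (- F 0)) as HH. rewrite Rabs_Ropp in HH.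
      unfold Rabs in H. destruct (Rcase_abs (F (-b) - F 0 - - b)); unfold b in *; lra. }
    assert (Hc : continuity F).
    { intro x. unfold F. apply continuity_pt_plus; [|apply continuity_pt_const; intros ? ?; reflexivity].
      apply continuity_pt_minus; [apply continuity_pt_id|].
      apply continuity_pt_mult; [apply continuity_pt_const; intros ? ?; reflexivity|].
      apply phi_cont; auto. }
    destruct (IVT F (-b) b Hc ltac:(lra) Fa Fb) as [x [_ Hx]].
    exists x. unfold F in Hx. lra.
Qed.

Lemma gamma_spec mu alpha y : gdom mu y -> gamma mu alpha y = mu * phi (gamma mu alpha y) y - ln alpha.
Proof.
  intro Hd. unfold gamma.
  apply (epsilon_spec (inhabits 0) (fun x => x = mu * ln (sqrt (x ^ 2 + y ^ 2)) - ln alpha)).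
  apply gamma_exists; auto.
Qed.

Lemma ln_le' a b : 0 < a -> a <= b -> ln a <= ln b.
Proof. intros Ha Hb. destruct (Rle_lt_or_eq_dec _ _ Hb) as [h|h].
  - left. apply ln_increasing; auto. - subst; lra. Qed.

Lemma phi_ge x y : y <> 0 -> ln (Rabs y) <= phi x y.
Proof.
  intro Hy. unfold phi. apply ln_le'. apply Rabs_pos_lt; auto.
  rewrite <- (sqrt_pow2 (Rabs y)) by apply Rabs_pos. rewrite pow2_abs.
  apply sqrt_le_1_alt. pose proof (pow2_ge_0 x). lra.
Qed.

Lemma part2 mu alpha : 0 < alpha ->
        (0 < mu -> forall M, exists N, forall y, gdom mu y -> N < Rabs y ->
                     M < gamma mu alpha y)
        /\ (mu < 0 -> forall M, exists N, forall y, gdom mu y -> N < Rabs y ->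
                     gamma mu alpha y < M)
        /\ (mu = 0 -> forall y, gdom mu y -> gamma mu alpha y = - ln alpha).
Proof.
  intro Ha. split; [|split].
  - intros Hm M. exists (exp ((M + ln alpha) / mu)). intros y Hd HN.
    pose proof (exp_pos ((M + ln alpha) / mu)).
    assert (Hy : y <> 0) by (intro; subst; rewrite Rabs_R0 in HN; lra).
    assert (H1 : (M + ln alpha) / mu < ln (Rabs y)).
    { rewrite <- (ln_exp ((M + ln alpha) / mu)). apply ln_increasing; auto. }
    assert (H2 : M + ln alpha < mu * ln (Rabs y)).
    { apply Rmult_lt_compat_l with (r := mu) in H1; auto.
      replace (mu * ((M + ln alpha) / mu)) with (M + ln alpha) in H1 by (field; lra). auto. }
    pose proof (phi_ge (gamma mu alpha y) y Hy).
    rewrite (gamma_spec mu alpha y Hd). nra.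
  - intros Hm M. exists (exp ((M + ln alpha) / mu)). intros y Hd HN.
    pose proof (exp_pos ((M + ln alpha) / mu)).
    assert (Hy : y <> 0) by (intro; subst; rewrite Rabs_R0 in HN; lra).
    assert (H1 : (M + ln alpha) / mu < ln (Rabs y)).
    { rewrite <- (ln_exp ((M + ln alpha) / mu)). apply ln_increasing; auto. }
    assert (H2 : mu * ln (Rabs y) < M + ln alpha).
    { apply Rmult_lt_gt_compat_neg_l with (r := mu) in H1; auto.
      replace (mu * ((M + ln alpha) / mu)) with (M + ln alpha) in H1 by (field; lra). auto. }
    pose proof (phi_ge (gamma mu alpha y) y Hy).
    rewrite (gamma_spec mu alpha y Hd). nra.
  - intros Hm y Hd. rewrite (gamma_spec mu alpha y Hd). subst. ring.
Qed.

Lemma part4 mu alpha beta : 0 < beta -> beta < alpha ->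
        (forall y, gdom mu y ->
           2 / 3 * ln (alpha / beta) <= gamma mu beta y - gamma mu alpha y
           /\ gamma mu beta y - gamma mu alpha y <= 2 * ln (alpha / beta))
        /\ (forall eps, 0 < eps -> exists N, forall y, gdom mu y -> N < Rabs y ->
              Rabs (gamma mu beta y - gamma mu alpha y - ln (alpha / beta)) < eps).
Proof.
  intros Hb Hab.
  assert (HL : ln (alpha / beta) = ln alpha - ln beta).
  { unfold Rdiv. rewrite ln_mult, ln_Rinv; try lra. apply Rinv_0_lt_compat; lra. }
  assert (HLp : 0 < ln alpha - ln beta).
  { pose proof (ln_increasing beta alpha Hb Hab). lra. }
  rewrite HL.
  assert (Hest : forall y, gdom mu y ->
     Rabs (gamma mu beta y - gamma mu alpha y - (ln alpha - ln beta)) <=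
     Rabs mu * Rabs (gamma mu beta y - gamma mu alpha y) / (2 * Rabs y)
     /\ (mu <> 0 -> y <> 0)).
  { intros y Hd. destruct (Req_dec mu 0) as [H0|H0].
    - rewrite (gamma_spec mu alpha y Hd), (gamma_spec mu beta y Hd). subst.
      rewrite Rabs_R0. split; [|tauto].
      replace (0 * _ - ln beta - (0 * _ - ln alpha) - (ln alpha - ln beta)) with 0 by ring.
      rewrite Rabs_R0. unfold Rdiv. rewrite !Rmult_0_l. lra.
    - pose proof (gdom_nz mu y H0 Hd) as Hy. split; [|auto].
      set (xa := gamma mu alpha y). set (xb := gamma mu beta y).
      assert (E : xb - xa - (ln alpha - ln beta) = mu * (phi xb y - phi xa y)).
      { pose proof (gamma_spec mu alpha y Hd) as Ea. pose proof (gamma_spec mu beta y Hd) as Eb.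
        fold xa xb in Ea, Eb. lra. }
      rewrite E, Rabs_mult. unfold Rdiv. rewrite Rmult_assoc. apply Rmult_le_compat_l; [apply Rabs_pos|].
      apply phi_x_bound; auto. }
  assert (Hbd : forall y, gdom mu y ->
     4/5 * (ln alpha - ln beta) <= gamma mu beta y - gamma mu alpha y
     /\ gamma mu beta y - gamma mu alpha y <= 4/3 * (ln alpha - ln beta)).
  { intros y Hd. destruct (Hest y Hd) as [H1 H2].
    set (D := gamma mu beta y - gamma mu alpha y) in *.
    set (L := ln alpha - ln beta) in *.
    assert (H3 : Rabs (D - L) <= Rabs D / 4).
    { destruct (Req_dec mu 0) as [H0|H0].
      - subst. rewrite Rabs_R0 in H1. pose proof (Rabs_pos D). lra.
      - eapply Rle_trans; [exact H1|]. unfold gdom in Hd.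
        assert (0 < Rabs y) by (apply Rabs_pos_lt; auto).
        pose proof (Rabs_pos D). pose proof (Rabs_pos mu).
        apply Rmult_le_reg_r with (2 * Rabs y * 4); [lra|].
        field_simplify; [|lra]. nra. }
    unfold Rabs in H3; repeat destruct Rcase_abs in H3; lra. }
  split.
  - intros y Hd. destruct (Hbd y Hd). split; lra.
  - intros eps He. exists (Rabs mu * (ln alpha - ln beta) / eps). intros y Hd HN.
    destruct (Hest y Hd) as [H1 H2]. destruct (Hbd y Hd) as [H3 H4].
    set (D := gamma mu beta y - gamma mu alpha y) in *.
    set (L := ln alpha - ln beta) in *.
    pose proof (Rabs_pos mu).
    assert (HN0 : 0 <= Rabs mu * L / eps) by (apply Rmult_le_pos; [nra|left; apply Rinv_0_lt_compat; lra]).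
    assert (Hy : 0 < Rabs y) by lra.
    assert (HN' : Rabs mu * L < eps * Rabs y).
    { apply Rmult_lt_compat_l with (r := eps) in HN; auto.
      replace (eps * (Rabs mu * L / eps)) with (Rabs mu * L) in HN by (field; lra). auto. }
    rewrite (Rabs_right D) in H1 by lra.
    eapply Rle_lt_trans; [exact H1|].
    apply Rmult_lt_reg_r with (2 * Rabs y); [lra|].
    field_simplify; [|lra]. nra.
Qed.
Section C.
Context {U : UniformSpace}.
Lemma cmul (f g : U -> R) v : continuous f v -> continuous g v -> continuous (fun v => f v * g v) v.
Proof. intros. apply (continuous_mult f g v); auto. Qed.
Lemma cplus (f g : U -> R) v : continuous f v -> continuous g v -> continuous (fun v => f v + g v) v.
Proof. intros. apply (@continuous_plus U R_AbsRing R_NormedModule f g v); auto. Qed.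
Lemma copp (f : U -> R) v : continuous f v -> continuous (fun v => - f v) v.
Proof. intros. apply (@continuous_opp U R_AbsRing R_NormedModule f v); auto. Qed.
Lemma cinv (f : U -> R) v : continuous f v -> f v <> 0 -> continuous (fun v => / f v) v.
Proof. intros. apply (continuous_comp f Rinv v); auto. apply continuous_Rinv; auto. Qed.
Lemma cconst (c : R) v : continuous (fun _ : U => c) v.
Proof. apply continuous_const. Qed.
End C.
Lemma ex (v: (R*R)) : continuous (fun v => fst v) v.
Proof. destruct v. apply continuous_fst. Qed.
Lemma extract (f : (R*R)*(R*R) -> R) x1 x2 x3 x4 : continuous f ((x1,x2),(x3,x4)) ->
  forall eps, 0 < eps -> exists d, 0 < d /\ forall p a b c, Rabs (p - x1) < d -> Rabs (a - x2) < d ->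
   Rabs (b - x3) < d -> Rabs (c - x4) < d -> Rabs (f ((p,a),(b,c)) - f ((x1,x2),(x3,x4))) < eps.
Proof.
  intros H eps He. apply filterlim_locally with (eps := mkposreal eps He) in H.
  destruct H as [d Hd]. exists d. split; [apply cond_pos|].
  intros p a b c H1 H2 H3 H4. specialize (Hd ((p,a),(b,c))). 
  apply Hd. repeat split; assumption.
Qed.
Lemma cp1 (v : (R*R)*(R*R)) : continuous (fun v : (R*R)*(R*R) => fst (fst v)) v.
Proof. destruct v as [[p a] [b c]]. apply (continuous_comp fst fst). apply continuous_fst. apply continuous_fst. Qed.
Lemma cp2 (v : (R*R)*(R*R)) : continuous (fun v : (R*R)*(R*R) => snd (fst v)) v.
Proof. destruct v as [[p a] [b c]]. apply (continuous_comp fst snd). apply continuous_fst. apply continuous_snd. Qed.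
Lemma cp3 (v : (R*R)*(R*R)) : continuous (fun v : (R*R)*(R*R) => fst (snd v)) v.
Proof. destruct v as [[p a] [b c]]. apply (continuous_comp snd fst). apply continuous_snd. apply continuous_fst. Qed.
Lemma cp4 (v : (R*R)*(R*R)) : continuous (fun v : (R*R)*(R*R) => snd (snd v)) v.
Proof. destruct v as [[p a] [b c]]. apply (continuous_comp snd snd). apply continuous_snd. apply continuous_snd. Qed.


Lemma xi_bound c y : y <> 0 -> Rabs (c / (c^2+y^2)) <= 1 / (2 * Rabs y).
Proof.
  intro Hy. assert (Hy2 : 0 < y^2) by (apply pow2_gt_0; auto).
  assert (Hay : 0 < Rabs y) by (apply Rabs_pos_lt; auto).
  assert (0 < c^2+y^2) by (pose proof (pow2_ge_0 c); lra).
  rewrite Rabs_div, (Rabs_right (c^2+y^2)) by lra.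
  apply Rmult_le_reg_r with (2 * Rabs y * (c^2+y^2)); [nra|].
  field_simplify; [|lra|lra].
  rewrite <- (pow2_abs c), <- (pow2_abs y).
  assert (0 <= (Rabs c - Rabs y)^2) by apply pow2_ge_0. lra.
Qed.
Definition Kf mu p a b c := mu * b / (p*p + b*b) / (1 - mu * a / (a*a + c*c)).

Lemma Kf_cont mu x y : y <> 0 -> 2 * Rabs mu <= Rabs y ->
  forall eps, 0 < eps -> exists d, 0 < d /\ forall p a b c, Rabs (p - x) < d -> Rabs (a - x) < d ->
   Rabs (b - y) < d -> Rabs (c - y) < d -> Rabs (Kf mu p a b c - Kf mu x x y y) < eps.
Proof.
  intros Hy Hm.
  set (g := fun v : (R*R)*(R*R) => Kf mu (fst (fst v)) (snd (fst v)) (fst (snd v)) (snd (snd v))).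
  assert (Hpos : 0 < x*x + y*y) by (assert (0 < y*y) by (apply Rsqr_pos_lt; auto); nra).
  assert (Hden : 1 - mu * x / (x*x + y*y) <> 0).
  { assert (H : Rabs (x / (x*x+y*y)) <= 1 / (2 * Rabs y)).
    { replace (x*x+y*y) with (x^2+y^2) by ring. apply xi_bound; auto. }
    assert (Rabs (mu * x / (x*x+y*y)) <= 1/4).
    { unfold Rdiv. rewrite Rmult_assoc, Rabs_mult. unfold Rdiv in H.
      assert (0 < Rabs y) by (apply Rabs_pos_lt; auto).
      apply Rle_trans with (Rabs mu * (1 * / (2 * Rabs y))).
      apply Rmult_le_compat_l; [apply Rabs_pos|auto].
      apply Rmult_le_reg_r with (2 * Rabs y * 4); [lra|]. field_simplify; lra. }
    pose proof (Rle_abs (mu * x / (x*x+y*y))). lra. }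
  assert (Hc : continuous g ((x,x),(y,y))).
  { unfold g, Kf, Rdiv, Rminus.
    apply cmul; [apply cmul|apply cinv].
    - apply cmul; [apply cconst|apply cp3].
    - apply cinv; [apply cplus; apply cmul; try apply cp1; apply cp3|simpl; lra].
    - apply cplus; [apply cconst|apply copp].
      apply cmul; [apply cmul; [apply cconst|apply cp2]|].
      apply cinv; [apply cplus; apply cmul; try apply cp2; apply cp4|simpl; lra].
    - simpl. exact Hden. }
  intros eps He. destruct (extract g x x y y Hc eps He) as [d [Hd H]].
  exists d. split; auto.
Qed.

Lemma key mu alpha y z : mu <> 0 -> gdom mu y -> gdom mu z -> Rabs (z - y) < Rabs y ->
  let x := gamma mu alpha y in let x' := gamma mu alpha z in
  Rabs (x' - x) <= 2/3 * Rabs (z - y) /\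
  exists xi eta, Rabs (xi - x) <= Rabs (x' - x) /\ Rabs (eta - y) <= Rabs (z - y) /\
    1 - mu * xi / (xi*xi + z*z) <> 0 /\
    x' - x = Kf mu x xi eta z * (z - y).
Proof.
  intros Hm Hy Hz Hzy x x'.
  pose proof (gdom_nz mu y Hm Hy) as Hy0. pose proof (gdom_nz mu z Hm Hz) as Hz0.
  assert (Ex : x = mu * phi x y - ln alpha) by apply gamma_spec, Hy.
  assert (Ex' : x' = mu * phi x' z - ln alpha) by apply gamma_spec, Hz.
  destruct (mvt_gen (fun t => phi t z) (fun t => t / (t^2+z^2)) x x') as [xi [Hxi E1]].
  { intros c _. apply dphi_x. assert (0 < z^2) by (apply pow2_gt_0; auto). pose proof (pow2_ge_0 c). lra. }
  assert (Hmu : 0 < Rabs mu) by (apply Rabs_pos_lt; auto).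
  unfold gdom in Hy, Hz.
  assert (Hbe : forall eta, Rmin y z <= eta <= Rmax y z -> 2 * Rabs mu <= Rabs eta).
  { intros eta He. apply (between_bound (2 * Rabs mu) y z eta); auto; lra. }
  destruct (phi_y_mvt x y z) as [eta [Heta E2]].
  { intros eta He E. specialize (Hbe eta He). subst. rewrite Rabs_R0 in Hbe. lra. }
  pose proof (Hbe eta Heta) as Heta2.
  assert (Heta0 : eta <> 0) by (intro E; subst; rewrite Rabs_R0 in Heta2; lra).
  cbv beta in E1.
  assert (Hq1 : Rabs (mu * (xi / (xi^2+z^2))) <= 1/4).
  { rewrite Rabs_mult. pose proof (xi_bound xi z Hz0).
    assert (0 < Rabs z) by (apply Rabs_pos_lt; auto).
    apply Rle_trans with (Rabs mu * (1 / (2 * Rabs z))).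
    apply Rmult_le_compat_l; [apply Rabs_pos|auto].
    apply Rmult_le_reg_r with (2 * Rabs z * 4); [lra|]. field_simplify; lra. }
  assert (Hq2 : Rabs (mu * (eta / (x^2+eta^2))) <= 1/2).
  { rewrite Rabs_mult. pose proof (eta_bound x eta Heta0).
    assert (0 < Rabs eta) by (apply Rabs_pos_lt; auto).
    apply Rle_trans with (Rabs mu * (1 / Rabs eta)).
    apply Rmult_le_compat_l; [apply Rabs_pos|auto].
    apply Rmult_le_reg_r with (Rabs eta * 2); [lra|]. field_simplify; lra. }
  assert (Main : (x' - x) * (1 - mu * (xi / (xi^2+z^2))) = mu * (eta / (x^2+eta^2)) * (z - y)).
  { transitivity (x' - x - mu * (phi x' z - phi x z)); [rewrite E1; ring|].
    rewrite Rmult_assoc, <- E2. lra. }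
  set (q1 := mu * (xi / (xi ^ 2 + z ^ 2))) in *.
  set (q2 := mu * (eta / (x ^ 2 + eta ^ 2))) in *.
  assert (Hd1 : 1 - q1 <> 0) by (pose proof (Rle_abs q1); lra).
  split.
  - assert (E : x' - x = q1 * (x' - x) + q2 * (z - y)) by lra.
    assert (Rabs (x' - x) <= Rabs q1 * Rabs (x' - x) + Rabs q2 * Rabs (z - y)).
    { rewrite E at 1. rewrite <- !Rabs_mult. apply Rabs_triang. }
    pose proof (Rabs_pos (x' - x)). pose proof (Rabs_pos (z - y)).
    pose proof (Rabs_pos q1). pose proof (Rabs_pos q2). nra.
  - exists xi, eta. split; [|split; [|split]].
    + unfold Rmin, Rmax in Hxi. destruct (Rle_dec x x'); unfold Rabs; repeat destruct Rcase_abs; lra.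
    + unfold Rmin, Rmax in Heta. destruct (Rle_dec y z); unfold Rabs; repeat destruct Rcase_abs; lra.
    + replace (mu * xi / (xi * xi + z * z)) with q1; auto.
      unfold q1. replace (xi * xi) with (xi ^ 2) by ring. replace (z * z) with (z ^ 2) by ring. unfold Rdiv. ring.
    + unfold Kf. replace (mu * xi / (xi * xi + z * z)) with q1
        by (unfold q1; replace (xi * xi) with (xi ^ 2) by ring; replace (z * z) with (z ^ 2) by ring; unfold Rdiv; ring).
      replace (mu * eta / (x * x + eta * eta)) with q2
        by (unfold q2; replace (x * x) with (x ^ 2) by ring; replace (eta * eta) with (eta ^ 2) by ring; unfold Rdiv; ring).
      apply Rmult_eq_reg_r with (1 - q1); auto. rewrite Main. field. auto.
Qed.

Lemma Kf_bound mu x y : gdom mu y -> y <> 0 -> Rabs (Kf mu x x y y) <= 2 * Rabs mu / Rabs y.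
Proof.
  intros Hd Hy. unfold gdom in Hd.
  assert (Hy2 : 0 < y*y) by (apply Rsqr_pos_lt; auto).
  assert (Hay : 0 < Rabs y) by (apply Rabs_pos_lt; auto).
  assert (Hyy : Rabs y * Rabs y = y * y) by (rewrite <- Rabs_mult; apply Rabs_right; lra).
  assert (Hmm : Rabs mu * Rabs mu = mu * mu) by (rewrite <- Rabs_mult; apply Rabs_right; nra).
  pose proof (Rabs_pos mu) as Hpm. assert (H4 : 4 * (mu * mu) <= y * y) by nra.
  set (D := x*x + y*y - mu*x).
  assert (HD : y * y <= 2 * D) by (unfold D; nra).
  assert (HD0 : 0 < D) by lra.
  assert (E : Kf mu x x y y = mu * y / D).
  { unfold Kf, D. unfold D in HD0. field. split; nra. }
  rewrite E. unfold Rdiv. rewrite !Rabs_mult, Rabs_inv, (Rabs_right D) by lra.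
  pose proof (Rabs_pos mu).
  apply Rmult_le_reg_r with (D * Rabs y); [nra|].
  field_simplify; [|lra|lra]. nra.
Qed.

Lemma mu0_gamma mu alpha z : mu = 0 -> gamma mu alpha z = - ln alpha.
Proof.
  intro H. assert (Hd : gdom mu z) by (unfold gdom; subst; rewrite Rabs_R0; pose proof (Rabs_pos z); lra).
  rewrite (gamma_spec mu alpha z Hd). subst. ring.
Qed.

Lemma mu0_Kf mu p a b c : mu = 0 -> Kf mu p a b c = 0.
Proof. intro; subst; unfold Kf, Rdiv; ring. Qed.

Lemma part1 mu :
  (exists G' : R -> R -> R,
     (forall alpha, 0 < alpha ->
        (forall y, gdom mu y -> has_derivative_within (gamma mu alpha) (gdom mu) y (G' alpha y))
        /\ Defs.continuous_on (G' alpha) (gdom mu)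
        /\ (forall y, gdom mu y -> y <> 0 -> Rabs (G' alpha y) <= 2 * Rabs mu / Rabs y))
     /\ (forall eps, 0 < eps -> exists N, forall alpha, 0 < alpha ->
           forall y, gdom mu y -> N < Rabs y -> Rabs (G' alpha y) < eps)).
Proof.
  exists (fun alpha y => Kf mu (gamma mu alpha y) (gamma mu alpha y) y y).
  split.
  - intros alpha Ha. split; [|split].
    + intros y Hd eps He. destruct (Req_dec mu 0) as [H0|H0].
      * exists 1. split; [lra|]. intros z _ Hzy _.
        rewrite !mu0_gamma, mu0_Kf by auto.
        replace ((- ln alpha - - ln alpha) / (z - y) - 0) with 0 by (field; lra).
        rewrite Rabs_R0; lra.
      * pose proof (gdom_nz mu y H0 Hd) as Hy0.
        destruct (Kf_cont mu (gamma mu alpha y) y Hy0 Hd eps He) as [d [Hd0 Hc]].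
        assert (Hay : 0 < Rabs y) by (apply Rabs_pos_lt; auto).
        exists (Rmin d (Rabs y)). split; [apply Rmin_pos; auto|].
        intros z Hz Hzy Hlt.
        pose proof (Rmin_l d (Rabs y)) as Hm1. pose proof (Rmin_r d (Rabs y)) as Hm2.
        destruct (key mu alpha y z H0 Hd Hz ltac:(lra)) as [HL [xi [eta [H1 [H2 [H3 H4]]]]]].
        cbv zeta in *.
        rewrite H4. replace (Kf mu (gamma mu alpha y) xi eta z * (z - y) / (z - y))
          with (Kf mu (gamma mu alpha y) xi eta z) by (field; lra).
        apply Hc.
        -- rewrite Rminus_eq_0, Rabs_R0; lra.
        -- pose proof (Rabs_pos (z - y)). lra.
        -- lra.
        -- lra.
    + intros y Hd eps He. destruct (Req_dec mu 0) as [H0|H0].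
      * exists 1. split; [lra|]. intros z _ _. rewrite !mu0_Kf by auto.
        rewrite Rminus_eq_0, Rabs_R0; lra.
      * pose proof (gdom_nz mu y H0 Hd) as Hy0.
        destruct (Kf_cont mu (gamma mu alpha y) y Hy0 Hd eps He) as [d [Hd0 Hc]].
        assert (Hay : 0 < Rabs y) by (apply Rabs_pos_lt; auto).
        exists (Rmin d (Rabs y)). split; [apply Rmin_pos; auto|].
        intros z Hz Hlt.
        pose proof (Rmin_l d (Rabs y)) as Hm1. pose proof (Rmin_r d (Rabs y)) as Hm2.
        destruct (key mu alpha y z H0 Hd Hz ltac:(lra)) as [HL _].
        cbv zeta in *. pose proof (Rabs_pos (z - y)).
        apply Hc; lra.
    + intros y Hd Hy. apply Kf_bound; auto.
  - intros eps He. exists (2 * Rabs mu / eps). intros alpha Ha y Hd HN.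
    pose proof (Rabs_pos mu).
    assert (HN0 : 0 <= 2 * Rabs mu / eps) by (apply Rmult_le_pos; [lra|left; apply Rinv_0_lt_compat; lra]).
    assert (Hy : 0 < Rabs y) by lra.
    assert (Hy0 : y <> 0) by (intro E; subst; rewrite Rabs_R0 in Hy; lra).
    eapply Rle_lt_trans; [apply Kf_bound; auto|].
    assert (HN' : 2 * Rabs mu < eps * Rabs y).
    { apply Rmult_lt_compat_l with (r := eps) in HN; auto.
      replace (eps * (2 * Rabs mu / eps)) with (2 * Rabs mu) in HN by (field; lra). auto. }
    apply Rmult_lt_reg_r with (Rabs y); [lra|].
    field_simplify; lra.
Qed.

Import Defs.
Open Scope R_scope.

Theorem lemma5p2 (mu : R) :
  (* (i) + (iii): a continuous derivative G' alpha of gamma_{mu,alpha} on the domain *)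
  (exists G' : R -> R -> R,
     (forall alpha, 0 < alpha ->
        (forall y, gdom mu y -> has_derivative_within (gamma mu alpha) (gdom mu) y (G' alpha y))
        /\ continuous_on (G' alpha) (gdom mu)
        /\ (forall y, gdom mu y -> y <> 0 -> Rabs (G' alpha y) <= 2 * Rabs mu / Rabs y))
     /\ (forall eps, 0 < eps -> exists N, forall alpha, 0 < alpha ->
           forall y, gdom mu y -> N < Rabs y -> Rabs (G' alpha y) < eps))
  (* (ii) *)
  /\ (forall alpha, 0 < alpha ->
        (0 < mu -> forall M, exists N, forall y, gdom mu y -> N < Rabs y ->
                     M < gamma mu alpha y)
        /\ (mu < 0 -> forall M, exists N, forall y, gdom mu y -> N < Rabs y ->
                     gamma mu alpha y < M)
        /\ (mu = 0 -> forall y, gdom mu y -> gamma mu alpha y = - ln alpha))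
  (* (iv) *)
  /\ (forall alpha beta, 0 < beta -> beta < alpha ->
        (forall y, gdom mu y ->
           2 / 3 * ln (alpha / beta) <= gamma mu beta y - gamma mu alpha y
           /\ gamma mu beta y - gamma mu alpha y <= 2 * ln (alpha / beta))
        /\ (forall eps, 0 < eps -> exists N, forall y, gdom mu y -> N < Rabs y ->
              Rabs (gamma mu beta y - gamma mu alpha y - ln (alpha / beta)) < eps)).
Proof.
  split; [apply part1|split].
  - intros alpha Ha. apply part2; auto.
  - intros alpha beta Hb Hab. apply part4; auto.
Qed.
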